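(* Let $k\ge 1$ and $n$ be positive integers with $n>3k+\sqrt{2k^{2}-k}$. Then for every $k$-regular graph $G$ with $n$ vertices, the complement $\overline{G}$ is not Helly.
   Context: All graphs are finite and simple. A clique is a maximal set of pairwise adjacent vertices. A collection of sets is intersecting if any two members have nonempty intersection, and has the Helly property if every intersecting subcollection has nonempty total intersection. A graph is Helly if its collection of cliques has the Helly property. *)

(* Defs.v *)
From mathcomp Require Import all_boot all_order all_algebra all_field.
Set Implicit Arguments. Unset Strict Implicit. Unset Printing Implicit Defensive.

Definition simple_graph (V : finType) (e : rel V) : Prop :=
  symmetric e /\ irreflexive e.

Definition regular (V : finType) (e : rel V) (k : nat) : Prop :=
  forall v : V, #|[set w | e v w]| = k.

Definition complement (V : finType) (e : rel V) : rel V :=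
  fun x y => (x != y) && ~~ e x y.

Definition complete_set (V : finType) (e : rel V) (Q : {set V}) : bool :=
  [forall x in Q, forall y in Q, (x != y) ==> e x y].

Definition is_clique (V : finType) (e : rel V) (Q : {set V}) : bool :=
  maxset (complete_set e) Q.

Definition intersecting (V : finType) (F : {set {set V}}) : Prop :=
  forall A B, A \in F -> B \in F -> A :&: B != set0.

Definition helly_family (V : finType) (C : {set {set V}}) : Prop :=
  forall F : {set {set V}}, F \subset C -> intersecting F ->
    \bigcap_(A in F) A != set0.

Definition helly_graph (V : finType) (e : rel V) : Prop :=
  helly_family [set Q | is_clique e Q].

(* Main.v *)
Require Import Defs.
From mathcomp Require Import all_boot all_order all_algebra all_field.
From mathcomp Require Import zify.
Set Implicit Arguments. Unset Strict Implicit. Unset Printing Implicit Defensive.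


Lemma arith_main (k n t W Cc : nat) : 1 <= k -> 3 * k < n ->
  2 * k ^ 2 - k < (n - 3 * k) ^ 2 -> t * (n - 1 - k) <= k * (k - 1) ->
  W + t = 2 * k -> Cc + W + 2 = n -> k * W < Cc * (k - t) + 2 * k.
Proof.
move=> k1 kn hd ht hW hC.
have [d hnd] : exists d, n = 3 * k + d by exists (n - 3 * k); lia.
rewrite hnd addKn in hd.
have ht' : t * (2 * k + d - 1) <= k * (k - 1).
  by move: ht; rewrite hnd; have -> : 3 * k + d - 1 - k = 2 * k + d - 1 by lia.
clear ht.
have hk2 : 2 * k ^ 2 - k = 2 * k * k - k by rewrite expnS expn1 mulnA.
rewrite hk2 expnS expn1 in hd.
have dk : k + 1 <= d.
  case: (leqP (k+1) d) => // dk.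
  have dk' : d <= k by lia.
  have : d * d <= k * k by apply: leq_mul.
  lia.
have [f hf] : exists f, d = k + 1 + f by exists (d - (k+1)); lia.
subst d.
have h3e : k <= 3 * (f + 1).
  case: (leqP k (3 * (f+1))) => // hlt.
  have h : 3 * (f+1) <= k - 1 by lia.
  have : 9 * ((f+1) * (f+1)) <= (k-1)*(k-1) by have := leq_mul h h; lia.
  Timeout 20 nia.
have ht3 : 3 * t <= k - 1.
  have : t * (3 * k) <= k * (k - 1).
    apply: leq_trans ht'; apply: leq_mul => //; lia.
  Timeout 20 nia.
have key : t * t < (f+1) * (k-t) + 2 * t.
  have h1 : 9 * (t * t) <= (k-1)*(k-1).
    have := leq_mul ht3 ht3; lia.
  have h2 : k * (2 * k + 1) <= 3 * (f+1) * (3 * (k - t)).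
    by apply: leq_mul => //; lia.
  have h3 : (k-1)*(k-1) < k * (2 * k + 1).
    by apply: (@leq_ltn_trans (k * k)); [apply: leq_mul; lia | rewrite ltn_mul2l; lia].
  have e9 : 3 * (f+1) * (3 * (k - t)) = 9 * ((f+1) * (k-t)) by rewrite mulnCA !mulnA.
  rewrite e9 in h2.
  move: h1 h2 h3; move: ((f+1)*(k-t)) (t*t) ((k-1)*(k-1)) (k * (2 * k + 1)) => P Q R S.
  lia.
have [u hu] : exists u, k = t + u by exists (k - t); lia.
have hCc : Cc = 2 * k + f + t - 1 by lia.
have hWW : W = 2 * k - t by lia.
rewrite hCc hWW hu in key *.
have -> : t + u - t = u by lia.
rewrite addKn in key.
have [v hv] : exists v, u = v.+1 by exists (u.-1); lia.
subst u.
have -> : 2 * (t + v.+1) - t = t + 2 * v.+1 by lia.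
have -> : 2 * (t + v.+1) + f + t - 1 = 3 * t + 2 * v + (f + 1) by lia.
move: key; clear.
rewrite !mulnDl !mulnDr.
nia.
Qed.

Section G.
Variable V : finType.

Lemma card_cnt (A : {set V}) (P : pred V) :
  \sum_(x in A) (P x : nat) = #|[set x in A | P x]|.
Proof.
rewrite -sum1_card [RHS](eq_bigl (fun x => (x \in A) && P x)); last first.
  by move=> x /=; rewrite inE.
by rewrite [RHS]big_mkcondr /=; apply: eq_bigr => x _; case: (P x).
Qed.

Lemma dc (A B : {set V}) (r : rel V) :
  \sum_(x in A) #|[set y in B | r x y]| = \sum_(y in B) #|[set x in A | r x y]|.
Proof.
rewrite (eq_bigr (fun x => \sum_(y in B) (r x y : nat))); last by move=> x _; rewrite card_cnt.
rewrite exchange_big /=; apply: eq_bigr => y _; by rewrite card_cnt.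
Qed.

Lemma avg (A : {set V}) (f : V -> nat) B : 0 < #|A| -> \sum_(i in A) f i <= B ->
  exists2 i, i \in A & f i * #|A| <= B.
Proof.
move=> A0 hs.
case: (pickP [pred i | (i \in A) && (f i * #|A| <= B)]) => [i /andP [iA hi] | hn].
  by exists i.
have h1 : \sum_(i in A) B.+1 <= \sum_(i in A) (f i * #|A|).
  apply: leq_sum => i iA; move: (hn i); rewrite /= iA /= ltnNge => ->; done.
rewrite sum_nat_const -big_distrl /= in h1.
have h2 := leq_mul hs (leqnn #|A|).
move: h1 h2; move: (\sum_(i in A) f i) => S; nia.
Qed.


Variable e : rel V.
Hypothesis sym : symmetric e.
Hypothesis irr : irreflexive e.
Variable k n : nat.
Hypothesis reg : forall v, #|[set w | e v w]| = k.
Hypothesis cardV : #|V| = n.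
Hypothesis k1 : 1 <= k.
Hypothesis kn : 3 * k < n.
Hypothesis hd : 2 * k ^ 2 - k < (n - 3 * k) ^ 2.

Local Notation N v := [set w | e v w].

Lemma good_triple : exists a b c,
  [/\ ~~ e a b, ~~ e a c & ~~ e b c] /\ [/\ a != b, a != c & b != c] /\
  #|N a :&: N b| + #|N c :&: (N a :|: N b)| < k.
Proof.
have : 0 < #|V| by lia.
move/card_gt0P => [a _].
pose M := ~: (a |: N a).
have cM : #|M| + k + 1 = n.
  have := cardsC (a |: N a); rewrite cardsU1 inE irr reg cardV /=; rewrite /M; lia.
have hsum : \sum_(b in M) #|N a :&: N b| <= k * (k - 1).
  have -> : \sum_(b in M) #|N a :&: N b| = \sum_(b in M) #|[set x in N a | e b x]|.
    by apply: eq_bigr => b _; apply: eq_card => x; rewrite !inE.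
  rewrite dc -(reg a) -sum_nat_const; apply: leq_sum => x xa.
  rewrite reg -(reg x) (cardsD1 a (N x)) inE sym.
  rewrite inE in xa; rewrite xa add1n /=.
  rewrite subn1 /=; apply: subset_leq_card; apply/subsetP => y; rewrite !inE => /andP [].
  by move=> /norP [-> _] hyx; rewrite sym.
have M0 : 0 < #|M| by lia.
have [b bM ht] := avg M0 hsum.
move: bM; rewrite !inE negb_or => /andP [ba nab].
pose t := #|N a :&: N b|.
pose W := N a :|: N b.
have hW : #|W| + t = 2 * k by rewrite /W /t cardsUI !reg; lia.
pose C := ~: (W :|: [set a; b]).
have disj : W :&: [set a; b] = set0.
  apply/setP => x; rewrite !inE; apply/negbTE; apply/negP.
  move=> /andP [/orP [] hx /orP [] /eqP ex]; subst x.
  - by rewrite irr in hx.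
  - by rewrite hx in nab.
  - by rewrite sym hx in nab.
  - by rewrite irr in hx.
have hC : #|C| + #|W| + 2 = n.
  have := cardsUI W [set a; b]; rewrite disj cards0 cards2 (_ : (a != b) = true); last by rewrite eq_sym.
  have := cardsC (W :|: [set a; b]); rewrite cardV /C; lia.
have key : k * #|W| < #|C| * (k - t) + 2 * k.
  apply: (arith_main k1 kn hd _ hW hC).
  have -> : n - 1 - k = #|M| by lia.
  exact: ht.
have hper : forall x, x \in W -> #|[set c in C | e c x]| + (e x a + e x b) <= k.
  move=> x xW; rewrite -(reg x) (cardsD1 a (N x)) (cardsD1 b (N x :\ a)) !inE ba /=.
  suff : #|[set c in C | e c x]| <= #|N x :\ a :\ b| by lia.
  apply: subset_leq_card; apply/subsetP => y; rewrite !inE.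
  move=> /andP [/norP [_ /norP [ya yb]] hyx].
  by rewrite ya yb sym hyx.
have hsum2 : \sum_(c in C) #|N c :&: W| + 2 * k <= #|W| * k.
  have -> : \sum_(c in C) #|N c :&: W| = \sum_(c in C) #|[set x in W | e c x]|.
    by apply: eq_bigr => c _; apply: eq_card => x; rewrite !inE andbC.
  rewrite dc -sum_nat_const.
  have ea : forall z, z \in [set a; b] -> \sum_(x in W) (e x z : nat) = k.
    move=> z zab; rewrite card_cnt -(reg z); apply: eq_card => x; rewrite !inE.
    rewrite (sym x z); case ezx: (e z x); rewrite ?andbF ?andbT //.
    by move: ezx; move: zab; rewrite !inE => /orP [] /eqP -> ->; rewrite ?orbT.
  rewrite mul2n -addnn -{1}(ea a) ?inE ?eqxx // -{1}(ea b) ?inE ?eqxx ?orbT //.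
  rewrite -!big_split /=; apply: leq_sum => x xW.
  exact: hper.
case: (pickP [pred c | (c \in C) && (#|N c :&: W| + t < k)]) => [c /andP [cC hc] | hn]; last first.
  exfalso.
  have h1 : \sum_(c in C) (k - t) <= \sum_(c in C) #|N c :&: W|.
    apply: leq_sum => c cC; move: (hn c); rewrite /= cC /=; move/negbT; rewrite -leqNgt; lia.
  rewrite sum_nat_const in h1.
  lia.
move: cC; rewrite !inE !negb_or => /and3P [/andP [nac nbc] ca cb].
exists a, b, c; split; first by rewrite nab nac nbc.
by split; [rewrite eq_sym ba eq_sym ca eq_sym cb | rewrite addnC].
Qed.

End G.

Lemma comp3 (V : finType) (e : rel V) (sym : symmetric e) (x y z : V) :
  ~~ e x y -> ~~ e x z -> ~~ e y z -> complete_set (complement e) [set x; y; z].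
Proof.
move=> xy xz yz.
apply/forallP => p; apply/implyP; rewrite !inE => hp.
apply/forallP => q; apply/implyP; rewrite !inE => hq.
apply/implyP => pq; rewrite /complement pq /=.
move: hp hq pq; rewrite -!orbA => /or3P [] /eqP -> /or3P [] /eqP -> pq;
  rewrite ?eqxx // in pq *; rewrite ?(sym y x) ?(sym z x) ?(sym z y) //.
Qed.

Import Order.TTheory GRing.Theory Num.Theory.
Local Open Scope ring_scope.

Lemma arith_hyp (k n : nat)
  (hn : 3%:R * (k%:R : algC) + sqrtC ((2 * k ^ 2 - k)%N)%:R < n%:R) :
  (3 * k < n)%N /\ (2 * k ^ 2 - k < (n - 3 * k) ^ 2)%N.
Proof.
set x := ((2 * k ^ 2 - k)%N)%:R : algC.
have s0 : 0 <= sqrtC x by rewrite sqrtC_ge0 ler0n.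
have h3 : (3 * k < n)%N.
  rewrite -(ltr_nat algC) natrM; apply: le_lt_trans hn.
  by rewrite lerDl.
split => //.
have hd : (n%:R : algC) = (3 * k)%:R + (n - 3 * k)%N%:R.
  by rewrite -natrD subnKC // ltnW.
rewrite hd natrM ltrD2l in hn.
rewrite -(ltr_nat algC) natrX -(@ltr_sqrtC algC) ?sqrCK ?qualifE /= ?ler0n ?exprn_ge0 //.
Qed.

Theorem mainTheorem6 (k n : nat) (hk : (1 <= k)%N)
  (hn : 3%:R * (k%:R : algC) + sqrtC ((2 * k ^ 2 - k)%N)%:R < n%:R) :
  forall (V : finType) (e : rel V),
    #|V| = n -> simple_graph e -> regular e k ->
    ~ helly_graph (complement e).
Proof.
move=> V e cardV [sym irr] reg helly.
have [h3 hd] := arith_hyp hn.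
have [a [b [c [[nab nac nbc] [[ab ac bc] hX]]]]] := good_triple sym irr reg cardV hk h3 hd.
pose F := [set Q | is_clique (complement e) Q &&
   [|| (a \in Q) && (b \in Q), (b \in Q) && (c \in Q) | (a \in Q) && (c \in Q)]].
have sub : F \subset [set Q | is_clique (complement e) Q].
  by apply/subsetP => Q; rewrite !inE => /andP [].
have inter : intersecting F.
  move=> A B; rewrite !inE => /andP [_ hA] /andP [_ hB].
  case/or3P: hA => /andP [h1 h2]; case/or3P: hB => /andP [h3' h4]; apply/set0Pn;
  first [ exists a; rewrite inE; apply/andP; split; assumption
        | exists b; rewrite inE; apply/andP; split; assumption
        | exists c; rewrite inE; apply/andP; split; assumption ].
have := helly F sub inter.
move/set0Pn => [w /bigcapP Hw].
have : ~~ ([set v | e w v] \subset ([set v | e a v] :&: [set v | e b v]) :|: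
          ([set v | e c v] :&: ([set v | e a v] :|: [set v | e b v]))).
  apply/negP => /subset_leq_card; rewrite reg.
  case: (leq_card_setU ([set v | e a v] :&: [set v | e b v])
          ([set v | e c v] :&: ([set v | e a v] :|: [set v | e b v]))) => hle _.
  move: hle hX; lia.
move/subsetPn => [u uw uX].
move: uw uX; rewrite !inE => ewu /norP [nabu ncu].
have fin : forall x y, ~~ e u x -> ~~ e u y -> ~~ e x y ->
   (forall Q : {set V}, x \in Q -> y \in Q ->
   [|| (a \in Q) && (b \in Q), (b \in Q) && (c \in Q) | (a \in Q) && (c \in Q)]) -> False.
  move=> x y ux uy xy hp.
  have [Q mQ sQ] := maxset_exists (comp3 sym ux uy xy).
  have uQ : u \in Q by apply: (subsetP sQ); rewrite !inE eqxx.
  have xQ : x \in Q by apply: (subsetP sQ); rewrite !inE eqxx ?orbT.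
  have yQ : y \in Q by apply: (subsetP sQ); rewrite !inE eqxx ?orbT.
  have QF : Q \in F by rewrite inE /is_clique mQ /= (hp Q xQ yQ).
  have wQ := Hw Q QF.
  move/maxsetP: mQ => [cQ _].
  have wu : w != u by apply/eqP => ewu'; rewrite ewu' irr in ewu.
  move/forallP: cQ => /(_ w) /implyP /(_ wQ) /forallP /(_ u) /implyP /(_ uQ) /implyP /(_ wu).
  by rewrite /complement wu /= ewu.
case ecu: (e c u).
  rewrite ecu /= negb_or in ncu; case/andP: ncu => nau nbu.
  apply: (fin a b); rewrite ?(sym u) //.
  by move=> Q -> ->.
case eau: (e a u).
  rewrite eau /= in nabu.
  apply: (fin b c); rewrite ?(sym u) ?ecu //.
  by move=> Q -> ->; rewrite orbT.
apply: (fin a c); rewrite ?(sym u) ?ecu ?eau //.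
by move=> Q -> ->; rewrite !orbT.
Qed.
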